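(* Let $X$, $Y$ be bigraphs and $f,g:X\to Y$ bigraph homomorphisms. The following are equivalent: (1) $f$ and $g$ are $\times$-homotopic; (2) there is a $\times$-homotopy from $f$ to $g$; (3) $f$ and $g$ belong to the same connected component of the maximal reflexive subgraph of $Y^X$.
   Context: A graph is a set $V$ with a symmetric relation $E\subset V\times V$ (loops allowed); it is reflexive if every vertex has a loop, and the maximal reflexive subgraph is the induced subgraph on looped vertices. $K_2$ has vertices $0,1$ and edges $(0,1),(1,0)$. A bigraph is a graph $X$ with a graph homomorphism $\varepsilon_X:X\to K_2$; $V_i(X)=\varepsilon_X^{-1}(i)$; bigraph homomorphisms commute with colorings. A 2-colored multi-homomorphism $\eta$ from $X$ to $Y$ assigns to each $v\in V(X)$ a finite nonempty $\eta(v)\subset V_i(Y)$ for $v\in V_i(X)$, with $\eta(v)\times\eta(w)\subset E(Y)$ whenever $(v,w)\in E(X)$; $\mathrm{Hom}_{/K_2}(X,Y)$ is the poset of these ordered by pointwise inclusion, and a homomorphism $f$ is identified with $v\mapsto\{f(v)\}$. $f,g$ are $\times$-homotopic if they lie in the same connected component of $\mathrm{Hom}_{/K_2}(X,Y)$. For $n\ge0$, $I_n$ is the graph with vertices $0,\dots,n$ and edges $(a,b)$ with $|a-b|\le1$; $X\times I_n$ is the categorical product (edges $((a,s),(a',s'))$ with $(a,a')\in E(X)$, $(s,s')\in E(I_n)$), colored via the first coordinate. A $\times$-homotopy from $f$ to $g$ is a bigraph homomorphism $F:X\times I_n\to Y$ for some $n\ge0$ with $F(a,0)=f(a)$ and $F(a,n)=g(a)$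 for all $a$. $Y^X$ is the graph whose vertices are maps $h:V(X)\to V(Y)$ with $\varepsilon_Y\circ h=\varepsilon_X$, with $h,h'$ adjacent iff $(h(a),h'(a'))\in E(Y)$ for all $(a,a')\in E(X)$. *)

(* Defs.v *)
From Stdlib Require Import List Relations.
Unset Implicit Arguments.

Record graph := Graph {
  V : Type;
  E : V -> V -> Prop;
  E_sym : forall x y, E x y -> E y x }.

Definition graph_hom (X Y : graph) (f : V X -> V Y) : Prop :=
  forall a b, E X a b -> E Y (f a) (f b).

(* K_2: vertices 0 (false), 1 (true); edges (0,1),(1,0). *)
Definition K2_E (a b : bool) : Prop := (a = false /\ b = true) \/ (a = true /\ b = false).
Lemma K2_E_sym a b : K2_E a b -> K2_E b a.
Proof. unfold K2_E; intuition. Qed.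
Definition K2 : graph := @Graph bool K2_E K2_E_sym.

Record bigraph := Bigraph {
  bg :> graph;
  eps : V bg -> bool;
  eps_hom : graph_hom bg K2 eps }.

Definition bigraph_hom (X Y : bigraph) (f : V X -> V Y) : Prop :=
  graph_hom X Y f /\ forall a, eps Y (f a) = eps X a.

(* 2-colored multi-homomorphisms: eta v is a finite nonempty subset of V_i(Y)
   for v in V_i(X), and eta v x eta w subset of E(Y) for (v,w) in E(X). *)
Definition finite_set (T : Type) (A : T -> Prop) : Prop :=
  exists l : list T, forall x, A x -> In x l.

Definition is_multihom (X Y : bigraph) (eta : V X -> V Y -> Prop) : Prop :=
  (forall v, finite_set (V Y) (eta v)) /\
  (forall v, exists y, eta v y) /\
  (forall v y, eta v y -> eps Y y = eps X v) /\
  (forall v w, E X v w -> forall y z, eta v y -> eta w z -> E Y y z).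

Definition Hom_K2 (X Y : bigraph) := { eta : V X -> V Y -> Prop | is_multihom X Y eta }.

Definition Hom_le (X Y : bigraph) (a b : Hom_K2 X Y) : Prop :=
  forall v y, proj1_sig a v y -> proj1_sig b v y.

Definition Hom_connected (X Y : bigraph) : Hom_K2 X Y -> Hom_K2 X Y -> Prop :=
  clos_refl_sym_trans _ (@Hom_le X Y).

(* a homomorphism f is identified with v |-> {f v} *)
Definition singleton_mh (X Y : bigraph) (f : V X -> V Y) : V X -> V Y -> Prop :=
  fun v y => y = f v.

Definition x_homotopic (X Y : bigraph) (f g : V X -> V Y) : Prop :=
  exists (pf : is_multihom X Y (@singleton_mh X Y f))
         (pg : is_multihom X Y (@singleton_mh X Y g)),
    Hom_connected X Y (exist _ _ pf) (exist _ _ pg).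

Definition In_V (n : nat) := { s : nat | s <= n }.
Definition In_E (n : nat) (s t : In_V n) : Prop :=
  proj1_sig s <= S (proj1_sig t) /\ proj1_sig t <= S (proj1_sig s).
Lemma In_E_sym n (s t : In_V n) : In_E n s t -> In_E n t s.
Proof. unfold In_E; intuition. Qed.
Definition I_ (n : nat) : graph := @Graph (In_V n) (In_E n) (In_E_sym n).

Definition prod_E (G H : graph) (p q : V G * V H) : Prop :=
  E G (fst p) (fst q) /\ E H (snd p) (snd q).
Lemma prod_E_sym (G H : graph) (p q : V G * V H) : prod_E G H p q -> prod_E G H q p.
Proof. unfold prod_E; intros [h1 h2]; split; apply E_sym; assumption. Qed.
Definition prod_graph (G H : graph) : graph := @Graph (V G * V H) (prod_E G H) (prod_E_sym G H).

Definition XxI_eps (X : bigraph) (n : nat) (p : V X * In_V n) : bool := eps X (fst p).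
Lemma XxI_eps_hom (X : bigraph) (n : nat) :
  graph_hom (prod_graph X (I_ n)) K2 (XxI_eps X n).
Proof. intros p q [h _]. exact (eps_hom X _ _ h). Qed.
Arguments XxI_eps_hom : clear implicits.
Definition XxI (X : bigraph) (n : nat) : bigraph := @Bigraph (prod_graph X (I_ n)) (XxI_eps X n) (XxI_eps_hom X n).

Definition In_0 (n : nat) : In_V n := exist _ 0 (le_0_n n).
Definition In_top (n : nat) : In_V n := exist _ n (le_n n).

Definition x_homotopy (X Y : bigraph) (f g : V X -> V Y) (n : nat)
    (F : V X * In_V n -> V Y) : Prop :=
  bigraph_hom (XxI X n) Y F /\
  (forall a, F (a, In_0 n) = f a) /\ (forall a, F (a, In_top n) = g a).

Definition exp_V (X Y : bigraph) := { h : V X -> V Y | forall a, eps Y (h a) = eps X a }.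
Definition exp_E (X Y : bigraph) (h h' : exp_V X Y) : Prop :=
  forall a a', E X a a' -> E Y (proj1_sig h a) (proj1_sig h' a').
Lemma exp_E_sym (X Y : bigraph) (h h' : exp_V X Y) : exp_E X Y h h' -> exp_E X Y h' h.
Proof. intros H a a' e. apply E_sym. apply H. apply E_sym. exact e. Qed.
Definition exp_graph (X Y : bigraph) : graph := @Graph (exp_V X Y) (exp_E X Y) (exp_E_sym X Y).

Definition refl_V (G : graph) := { x : V G | E G x x }.
Definition refl_E (G : graph) (x y : refl_V G) : Prop := E G (proj1_sig x) (proj1_sig y).
Lemma refl_E_sym (G : graph) (x y : refl_V G) : refl_E G x y -> refl_E G y x.
Proof. unfold refl_E; apply E_sym. Qed.
Definition max_refl_subgraph (G : graph) : graph := @Graph (refl_V G) (refl_E G) (refl_E_sym G).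

Definition same_component (G : graph) : V G -> V G -> Prop :=
  clos_refl_sym_trans _ (E G).

(* Main.v *)
Require Import Defs.
From Stdlib Require Import List Relations.
From Stdlib Require Import Arith Lia IndefiniteDescription.

Definition colored (X Y : bigraph) (h : V X -> V Y) := forall a, eps Y (h a) = eps X a.
Definition looped (X Y : bigraph) (h : V X -> V Y) := forall a a', E X a a' -> E Y (h a) (h a').
Definition adj (X Y : bigraph) (h h' : V X -> V Y) := forall a a', E X a a' -> E Y (h a) (h' a').
Definition good (X Y : bigraph) h := colored X Y h /\ looped X Y h.

Definition R (X Y : bigraph) (p q : V X -> V Y) :=
  exists n (H : nat -> V X -> V Y), (forall a, H 0 a = p a) /\ (forall a, H n a = q a) /\
    (forall s, s <= n -> good X Y (H s)) /\ (forall s, s < n -> adj X Y (H s) (H (S s))).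

Lemma adj_sym X Y h h' : adj X Y h h' -> adj X Y h' h.
Proof. intros A a a' e. apply E_sym. apply A. apply E_sym. exact e. Qed.

Lemma adj_ext X Y h1 h2 h1' h2' : (forall a, h1 a = h1' a) -> (forall a, h2 a = h2' a) ->
  adj X Y h1 h2 -> adj X Y h1' h2'.
Proof. intros e1 e2 A a a' e. rewrite <- e1, <- e2. apply A; exact e. Qed.

Lemma R_refl X Y p : good X Y p -> R X Y p p.
Proof. intros G. exists 0, (fun _ => p). split; [|split; [|split]].
  - auto. - auto. - intros s _; exact G. - intros s h; lia. Qed.

Lemma R_step X Y p q : good X Y p -> good X Y q -> adj X Y p q -> R X Y p q.
Proof. intros Gp Gq A. exists 1, (fun s => match s with 0 => p | _ => q end).
  split; [|split; [|split]].
  - auto. - auto. - intros [|s] _; auto.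
  - intros [|s] h; [exact A| lia]. Qed.

Lemma R_sym X Y p q : R X Y p q -> R X Y q p.
Proof. intros (n & H & H0 & Hn & Hg & Ha).
  exists n, (fun s => H (n - s)). split; [|split; [|split]].
  - intros a; rewrite Nat.sub_0_r; auto.
  - intros a; rewrite Nat.sub_diag; auto.
  - intros s _; apply Hg; lia.
  - intros s hs. replace (n - s) with (S (n - S s)) by lia.
    apply adj_sym. apply Ha. lia. Qed.

Lemma R_trans X Y p q r : R X Y p q -> R X Y q r -> R X Y p r.
Proof. intros (n & H & H0 & Hn & Hg & Ha) (m & H' & H0' & Hm' & Hg' & Ha').
  exists (n + m), (fun s => if le_lt_dec s n then H s else H' (s - n)). split; [|split; [|split]].
  - intros a. destruct (le_lt_dec 0 n); [auto|lia].
  - intros a. destruct (le_lt_dec (n+m) n).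
    + assert (m = 0) by lia. subst m. rewrite Nat.add_0_r. rewrite Hn, <- H0'. auto.
    + replace (n + m - n) with m by lia. auto.
  - intros s hs. destruct (le_lt_dec s n); [apply Hg; lia| apply Hg'; lia].
  - intros s hs. destruct (le_lt_dec s n); destruct (le_lt_dec (S s) n).
    + apply Ha; lia.
    + assert (s = n) by lia. subst s. replace (S n - n) with 1 by lia.
      apply (adj_ext X Y (H' 0) (H' 1)). { intros a; rewrite Hn, H0'; auto. } { auto. }
      apply Ha'; lia.
    + lia.
    + replace (S s - n) with (S (s - n)) by lia. apply Ha'; lia. Qed.

Lemma hom_to_R X Y f g n F : x_homotopy X Y f g n F -> R X Y f g.
Proof. intros [[Fh Fc] [F0 Fn]].
  exists n, (fun s a => match le_lt_dec s n with left h => F (a, exist _ s h) | right _ => g a end).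
  split; [|split; [|split]].
  - intros a. destruct (le_lt_dec 0 n) as [h|h]; [|lia].
    rewrite <- F0. unfold In_0. f_equal. f_equal. f_equal. apply le_unique.
  - intros a. destruct (le_lt_dec n n) as [h|h]; [|lia].
    rewrite <- Fn. unfold In_top. f_equal. f_equal. f_equal. apply le_unique.
  - intros s hs; split; [intros a|intros a a' e].
    { destruct (le_lt_dec s n) as [h|h]; [|lia].
    rewrite Fc. reflexivity. } destruct (le_lt_dec s n) as [h|h]; [|lia].
    apply (Fh (a, exist _ s h) (a', exist _ s h)). split; [exact e|]. simpl; unfold In_E; simpl; lia.
  - intros s hs a a' e. destruct (le_lt_dec s n) as [h|h]; [|lia].
    destruct (le_lt_dec (S s) n) as [h'|h']; [|lia].
    apply (Fh (a, exist _ s h) (a', exist _ (S s) h')). split; [exact e|]. simpl; unfold In_E; simpl; lia.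
Qed.

Lemma R_to_hom X Y f g : R X Y f g -> exists n F, x_homotopy X Y f g n F.
Proof. intros (n & H & H0 & Hn & Hg & Ha).
  exists n, (fun p => H (proj1_sig (snd p)) (fst p)). split; [split|split].
  - intros [a [s hs]] [a' [t ht]] [e ie]. simpl in *. unfold In_E in ie; simpl in ie.
    assert (s = t \/ t = S s \/ s = S t) as [ -> | [ -> | -> ] ] by lia.
    + apply (proj2 (Hg t ht)); exact e.
    + apply Ha; [lia|exact e].
    + apply adj_sym. apply Ha. lia. exact e.
  - intros [a [s hs]]. simpl. apply (proj1 (Hg s hs)).
  - intros a; simpl; auto.
  - intros a; simpl; auto.
Qed.

Definition ch X Y (eta : Hom_K2 X Y) : V X -> V Y :=
  fun v => proj1_sig (constructive_indefinite_description _ (proj1 (proj2 (proj2_sig eta)) v)).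

Lemma ch_spec X Y eta v : proj1_sig eta v (ch X Y eta v).
Proof. unfold ch. destruct constructive_indefinite_description; simpl; auto. Qed.

Lemma choice_good X Y (eta : Hom_K2 X Y) h : (forall v, proj1_sig eta v (h v)) -> good X Y h.
Proof. intros Hh. destruct eta as [e He]; simpl in *; destruct He as (Hfin & Hne & c & m). split.
  - intros a; apply c; auto.
  - intros a a' ed. apply (m a a' ed); auto. Qed.

Lemma choice_adj X Y (eta : Hom_K2 X Y) h h' : (forall v, proj1_sig eta v (h v)) ->
  (forall v, proj1_sig eta v (h' v)) -> adj X Y h h'.
Proof. intros Hh Hh' a a' ed. destruct eta as [e He]; simpl in *; destruct He as (Hfin & Hne & c & m). apply (m a a' ed); auto. Qed.

Lemma choice_R X Y (eta : Hom_K2 X Y) h h' : (forall v, proj1_sig eta v (h v)) ->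
  (forall v, proj1_sig eta v (h' v)) -> R X Y h h'.
Proof. intros; apply R_step; [eapply choice_good; eauto|eapply choice_good; eauto|eapply choice_adj; eauto]. Qed.

Lemma conn_R X Y a b : Hom_connected X Y a b -> R X Y (ch X Y a) (ch X Y b).
Proof. induction 1.
  - apply (choice_R X Y y). intros v; apply H, ch_spec. intros v; apply ch_spec.
  - apply R_refl. eapply choice_good. intros v; apply ch_spec.
  - apply R_sym; auto.
  - eapply R_trans; eauto. Qed.

Definition union_mh X Y (h h' : V X -> V Y) : V X -> V Y -> Prop :=
  fun v y => y = h v \/ y = h' v.

Lemma union_is_mh X Y h h' : good X Y h -> good X Y h' -> adj X Y h h' ->
  is_multihom X Y (union_mh X Y h h').
Proof. intros [c l] [c' l'] A. unfold union_mh. split; [|split; [|split]].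
  - intros v. exists (h v :: h' v :: nil). intros y [ -> | -> ]; simpl; auto.
  - intros v; exists (h v); auto.
  - intros v y [ -> | -> ]; auto.
  - intros v w e y z [ -> | -> ] [ -> | -> ]; auto. apply (adj_sym X Y h h' A); auto. Qed.

Lemma sing_mh X Y h : good X Y h -> is_multihom X Y (singleton_mh X Y h).
Proof. intros [c l]. unfold singleton_mh. split; [|split; [|split]].
  - intros v. exists (h v :: nil). intros y ->; simpl; auto.
  - intros v; exists (h v); auto.
  - intros v y ->; auto.
  - intros v w e y z -> ->; auto. Qed.

Lemma conn_adj X Y h h' pr pr' : good X Y h -> good X Y h' -> adj X Y h h' ->
  Hom_connected X Y (exist _ (singleton_mh X Y h) pr) (exist _ (singleton_mh X Y h') pr').
Proof. intros G G' A. pose (u := exist _ _ (union_is_mh X Y h h' G G' A) : Hom_K2 X Y).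
  apply rst_trans with u.
  - apply rst_step. intros v y; simpl; unfold singleton_mh, union_mh; auto.
  - apply rst_sym. apply rst_step. intros v y; simpl; unfold singleton_mh, union_mh; auto. Qed.

Lemma conn_eq X Y h h' pr pr' : (forall a, h a = h' a) ->
  Hom_connected X Y (exist _ (singleton_mh X Y h) pr) (exist _ (singleton_mh X Y h') pr').
Proof. intros e. apply rst_step. intros v y; simpl; unfold singleton_mh. rewrite e; auto. Qed.

Lemma R_to_xh X Y f g : bigraph_hom X Y f -> bigraph_hom X Y g -> R X Y f g -> x_homotopic X Y f g.
Proof. intros [lf cf] [lg cg] (n & H & H0 & Hn & Hg & Ha).
  assert (Gf : good X Y f) by (split; auto). assert (Gg : good X Y g) by (split; auto).
  exists (sing_mh X Y f Gf), (sing_mh X Y g Gg).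
  assert (K : forall k (hk : k <= n),
    Hom_connected X Y (exist _ _ (sing_mh X Y f Gf)) (exist _ _ (sing_mh X Y (H k) (Hg k hk)))).
  { induction k; intros hk.
    - apply conn_eq. intros a; rewrite H0; auto.
    - assert (hk' : k <= n) by lia. eapply rst_trans. apply (IHk hk').
      apply conn_adj; [apply Hg; lia|apply Hg; lia|apply Ha; lia]. }
  eapply rst_trans. apply (K n (le_n n)). apply conn_eq. auto. Qed.

Lemma xh_to_R X Y f g : bigraph_hom X Y f -> bigraph_hom X Y g -> x_homotopic X Y f g -> R X Y f g.
Proof. intros [lf cf] [lg cg] (pf & pg & C).
  assert (Gf : good X Y f) by (split; auto). assert (Gg : good X Y g) by (split; auto).
  pose proof (conn_R X Y _ _ C) as Rc.
  eapply R_trans. 2: eapply R_trans. 2: exact Rc.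
  - apply (choice_R X Y (exist _ _ pf)); simpl; unfold singleton_mh; auto.
    intros v. apply (ch_spec X Y (exist _ _ pf)).
  - apply (choice_R X Y (exist _ _ pg)); simpl; unfold singleton_mh; auto.
    intros v. apply (ch_spec X Y (exist _ _ pg)). Qed.

Lemma comp_R X Y (p q : V (max_refl_subgraph (exp_graph X Y))) :
  same_component _ p q -> R X Y (proj1_sig (proj1_sig p)) (proj1_sig (proj1_sig q)).
Proof. induction 1.
  - apply R_step; auto.
    + destruct x as [[x cx] lx]; split; auto.
    + destruct y as [[y cy] ly]; split; auto.
  - apply R_refl. destruct x as [[x cx] lx]; split; auto.
  - apply R_sym; auto.
  - eapply R_trans; eauto. Qed.

Lemma R_comp X Y f g : bigraph_hom X Y f -> bigraph_hom X Y g -> R X Y f g ->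
  exists p q : V (max_refl_subgraph (exp_graph X Y)),
       proj1_sig (proj1_sig p) = f /\ proj1_sig (proj1_sig q) = g /\
       same_component (max_refl_subgraph (exp_graph X Y)) p q.
Proof. intros [lf cf] [lg cg] (n & H & H0 & Hn & Hg & Ha).
  pose (p := exist _ (exist _ f cf : exp_V X Y) lf : V (max_refl_subgraph (exp_graph X Y))).
  pose (q := exist _ (exist _ g cg : exp_V X Y) lg : V (max_refl_subgraph (exp_graph X Y))).
  pose (mk := fun k (hk : k <= n) =>
     exist _ (exist _ (H k) (proj1 (Hg k hk)) : exp_V X Y) (proj2 (Hg k hk))
       : V (max_refl_subgraph (exp_graph X Y))).
  exists p, q. split; [reflexivity|split; [reflexivity|]].
  assert (K : forall k (hk : k <= n), same_component _ p (mk k hk)).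
  { induction k; intros hk.
    - apply rst_step. intros a a' e; simpl. rewrite H0. apply lf; auto.
    - assert (hk' : k <= n) by lia. eapply rst_trans. apply (IHk hk').
      apply rst_step. intros a a' e; simpl. apply Ha; auto; lia. }
  eapply rst_trans. apply (K n (le_n n)). apply rst_step. intros a a' e; simpl.
  rewrite Hn. apply lg; auto. Qed.

Theorem proposition3p6 (X Y : bigraph) (f g : V X -> V Y)
  (hf : bigraph_hom X Y f) (hg : bigraph_hom X Y g) :
  (x_homotopic X Y f g <->
     exists (n : nat) (F : V X * In_V n -> V Y), x_homotopy X Y f g n F) /\
  ((exists (n : nat) (F : V X * In_V n -> V Y), x_homotopy X Y f g n F) <->
     exists p q : V (max_refl_subgraph (exp_graph X Y)),
       proj1_sig (proj1_sig p) = f /\ proj1_sig (proj1_sig q) = g /\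
       same_component (max_refl_subgraph (exp_graph X Y)) p q).
Proof.
  split; split.
  - intros Hx. apply R_to_hom. apply xh_to_R; auto.
  - intros (n & F & HF). apply R_to_xh; auto. eapply hom_to_R; eauto.
  - intros (n & F & HF). apply R_comp; auto. eapply hom_to_R; eauto.
  - intros (p & q & ep & eq & C). apply R_to_hom. rewrite <- ep, <- eq. apply comp_R; auto.
Qed.
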